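(* Let $S^\star\subseteq S$. Then $S^\star$ generates $\mathcal{J}$ (as a two-sided ideal of $\mathcal{A}$) if and only if for every upper prime $U$ and every lower prime $D$ there exist words $U'\sim U$ and $D'\sim D$ such that either $U'D'-D'U'\in S^\star$ or $D'U'-U'D'\in S^\star$.
   Context: $\mathcal{A}$ is the free associative $\mathbb{C}$-algebra on noncommuting generators $L,R$; words are finite products of these letters. A word is balanced if it contains equally many $L$'s and $R$'s. $S=\{FG-GF : F,G \text{ nonempty balanced words}\}$ and $\mathcal{J}$ is the two-sided ideal generated by $S$. For words $X,Y$, $X\sim Y$ means $X-Y\in\mathcal{J}$. A word is prime if it is nonempty, balanced, and cannot be written as a product of two nonempty balanced words. For a balanced word $W=a_1\cdots a_n$, $e_k(W)=\sum_{i=1}^k\overline{a_i}$ ($0\le k\le n$) with $\overline{R}=1$, $\overline{L}=-1$. A prime $P$ of length $n$ is an upper prime if $e_k(P)>0$ for $1\le k\le n-1$, and a lower prime if $e_k(P)<0$ for $1\le k\le n-1$. *)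

(* Defs.v *)
(* The free associative C-algebra C<L,R> is modelled as the
   monoid algebra {malg C[word]} (multinomials' monalg) over the free monoid
   of words in two letters; C is the genuine field of complex numbers,
   built as (Stdlib R)[i] (mathcomp-real-closed's complex over the real
   closed field structure on Stdlib's reals from mathcomp-analysis' Rstruct). *)
From HB Require Import structures.
From mathcomp Require Import all_boot all_order all_algebra.
From mathcomp Require Import complex.
From mathcomp Require Import Rstruct.
From mathcomp.multinomials Require Import monalg.
From Stdlib Require Import Rdefinitions.

Set Implicit Arguments.
Unset Strict Implicit.
Unset Printing Implicit Defensive.

Import GRing.Theory Num.Theory.
Local Open Scope ring_scope.

Definition Cx : Type := complex Rdefinitions.R.


Inductive letter := Lt | Rt.

Definition letter_to_bool (a : letter) : bool := if a is Rt then true else false.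
Definition bool_to_letter (b : bool) : letter := if b then Rt else Lt.
Lemma letter_boolK : cancel letter_to_bool bool_to_letter.
Proof. by case. Qed.
HB.instance Definition _ := Countable.copy letter (can_type letter_boolK).

Definition word := seq letter.
HB.instance Definition _ := Countable.on word.

Lemma word_unitm (x y : word) : x ++ y = [::] -> x = [::] /\ y = [::].
Proof. by case: x => [|? ?] //; case: y. Qed.

HB.instance Definition _ := Choice_isMonomialDef.Build word
  (catA (T:=letter)) (@cat0s letter) (@cats0 letter) word_unitm.

Definition Alg := {malg Cx[word]}.
HB.instance Definition _ := GRing.Ring.on Alg.

Definition wA (w : word) : Alg := << w >>.

Definition lbar (a : letter) : int := if a is Rt then 1 else -1.

Definition ek (W : word) (k : nat) : int := \sum_(i < k) lbar (nth Lt W i).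

Definition balanced (W : word) : bool := count_mem Lt W == count_mem Rt W.

Definition prime_word (W : word) : Prop :=
  [/\ W != [::], balanced W &
      ~ exists U V : word, [/\ U != [::], V != [::], balanced U, balanced V
                              & W = U ++ V]].

Definition upper_prime (P : word) : Prop :=
  prime_word P /\ forall k : nat, (leq 1 k && leq k.+1 (size P)) -> 0 < ek P k.

Definition lower_prime (P : word) : Prop :=
  prime_word P /\ forall k : nat, (leq 1 k && leq k.+1 (size P)) -> ek P k < 0.

Definition Sgen (x : Alg) : Prop :=
  exists F G : word, [/\ F != [::], G != [::], balanced F, balanced G
                      & x = wA F * wA G - wA G * wA F].

Definition two_sided_ideal (I : Alg -> Prop) : Prop :=
  [/\ I 0, (forall x y, I x -> I y -> I (x - y)) &
      forall a x b, I x -> I (a * x * b)].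

Definition ideal_gen (T : Alg -> Prop) (x : Alg) : Prop :=
  forall I : Alg -> Prop, two_sided_ideal I -> (forall t, T t -> I t) -> I x.

Definition Jideal : Alg -> Prop := ideal_gen Sgen.

Definition wequiv (X Y : word) : Prop := Jideal (wA X - wA Y).

(* Main.v *)
Require Import Defs.
From mathcomp Require Import all_boot all_order all_algebra.
From mathcomp.multinomials Require Import monalg.
From HB Require Import structures.
From mathcomp Require Import complex Rstruct zify.
From Stdlib Require Import Relations Classical ClassicalEpsilon.
Import Order.TTheory GRing.Theory Num.Theory.
Local Open Scope ring_scope.

Definition ht (w : word) : int := (count_mem Rt w)%:Z - (count_mem Lt w)%:Z.

Lemma ht_nil : ht [::] = 0. Proof. by []. Qed.
Lemma ht_cat x y : ht (x ++ y) = ht x + ht y.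
Proof. rewrite /ht !count_cat !PoszD; lia. Qed.
Lemma ht_cons c w : ht (c :: w) = lbar c + ht w.
Proof. rewrite -cat1s ht_cat; by case: c. Qed.
Lemma ht_rcons w c : ht (rcons w c) = ht w + lbar c.
Proof. rewrite -cats1 ht_cat; by case: c. Qed.
Lemma balE w : balanced w <-> ht w = 0.
Proof. rewrite /balanced /ht; split => [/eqP->|H]; first by rewrite subrr.
apply/eqP; lia. Qed.
Lemma ht_take_cat k x y : ht (take k (x ++ y)) =
  if (k < size x)%N then ht (take k x) else ht x + ht (take (k - size x) y).
Proof. rewrite take_cat; case: ifP => //; by rewrite ht_cat. Qed.
Lemma ek_ht W k : (k <= size W)%N -> ek W k = ht (take k W).
Proof.
elim: k => [|k IH] Hk; first by rewrite /ek big_ord0 take0.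
rewrite /ek big_ord_recr /= -/(ek W k) IH ?(ltnW Hk) // (take_nth Lt Hk) ht_rcons.
done.
Qed.

Lemma htW (a F G b : word) k : ht F = 0 -> ht G = 0 -> ht (take k (a++F++G++b)) =
 if (k < size a)%N then ht (take k a)
 else if (k - size a < size F)%N then ht a + ht (take (k - size a) F)
 else if (k - size a - size F < size G)%N then ht a + ht (take (k - size a - size F) G)
 else ht a + ht (take (k - size a - size F - size G) b).
Proof.
move=> hF hG; rewrite ht_take_cat; case: ifP => // _.
rewrite ht_take_cat; case: ifP => // _.
rewrite ht_take_cat hF add0r; case: ifP => // _.
by rewrite hG add0r.
Qed.

Definition pfx (Q : int -> bool) (w : word) :=
  forall k, (0 < k)%N -> (k < size w)%N -> Q (ht (take k w)).

Lemma pfx_swap Q (a F G b : word) : ht F = 0 -> ht G = 0 -> F != [::] -> G != [::] ->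
  (a != [::]) || (b != [::]) -> pfx Q (a++F++G++b) -> pfx Q (a++G++F++b).
Proof.
move=> hF hG nF nG nab H k k0 kn.
have sF : (0 < size F)%N by rewrite lt0n size_eq0.
have sG : (0 < size G)%N by rewrite lt0n size_eq0.
move: kn; rewrite !size_cat => kn.
have HW := H; move: H.
have Hn : size (a ++ F ++ G ++ b) = (size a + (size F + (size G + size b)))%N by rewrite !size_cat.
rewrite /pfx Hn => H.
rewrite (htW _ _ _ _ _ hG hF).
case: (ltnP k (size a)) => h1.
  by move: (H k k0 ltac:(lia)); rewrite htW // h1.
case: (ltnP (k - size a) (size G)) => h2.
  case: (eqVneq k (size a)) => hk.
    move: (H k k0 ltac:(lia)); rewrite htW // ltnNge h1 /=.
    rewrite hk subnn ifT //; by rewrite !take0.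
  move: (H (k + size F)%N ltac:(lia) ltac:(lia)); rewrite htW //.
  rewrite ifF; last by apply/negbTE; rewrite -leqNgt; lia. rewrite ifF; last by apply/negbTE; rewrite -leqNgt; lia. rewrite ifT; last lia.
  by have -> : (k + size F - size a - size F = k - size a)%N by lia.
case: (ltnP (k - size a - size G) (size F)) => h3.
  case: (eqVneq (k - size G)%N 0%N) => hk.
    have a0 : a = [::] by apply: size0nil; lia.
    have b0 : (0 < size b)%N by move: nab; rewrite a0 /= lt0n size_eq0.
    move: (H (size F + size G)%N ltac:(lia) ltac:(lia)); rewrite htW //.
    rewrite a0 /= !subn0 ifF; last by apply/negbTE; rewrite -leqNgt; lia.
    rewrite ifF; last by apply/negbTE; rewrite -leqNgt; lia.
    have -> : (k - size G = 0)%N by lia.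
    have -> : (size F + size G - size F - size G = 0)%N by lia.
    by rewrite !take0 ht_nil.
  move: (H (k - size G)%N ltac:(lia) ltac:(lia)); rewrite htW //.
  rewrite ifF; last by apply/negbTE; rewrite -leqNgt; lia. rewrite ifT; last lia.
  by have -> : (k - size G - size a = k - size a - size G)%N by lia.
move: (H k k0 ltac:(lia)); rewrite htW //.
rewrite ifF; last by apply/negbTE; rewrite -leqNgt; lia. rewrite ifF; last by apply/negbTE; rewrite -leqNgt; lia. rewrite ifF; last by apply/negbTE; rewrite -leqNgt; lia.
by have -> : (k - size a - size F - size G = k - size a - size G - size F)%N by lia.
Qed.

Definition phi (h : word -> Cx) (x : Alg) : Cx := mmap (@idfun Cx) h x.
Lemma phiB h : {morph phi h : x y / x - y}.
Proof. move=> x y. exact: raddfB. Qed.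
Lemma phi0 h : phi h 0 = 0.
Proof. exact: raddf0. Qed.
Lemma mulUU (c1 c2 : Cx) (k1 k2 : word) :
  (<< c1 *g k1 >> : Alg) * << c2 *g k2 >> = << c1 * c2 *g (k1 ++ k2) >>.
Proof. by rewrite malgM_def fgmulUU. Qed.
Lemma wAM (u v : word) : wA u * wA v = wA (u ++ v).
Proof. by rewrite /wA mulUU mulr1. Qed.
Lemma phiU h c m : phi h << c *g m >> = c * h m.
Proof. exact: mmapU. Qed.
Lemma phi_ext h1 h2 x : h1 =1 h2 -> phi h1 x = phi h2 x.
Proof. move=> E; rewrite /phi !mmapE; apply: eq_bigr => k _; by rewrite E. Qed.
Lemma phiUxU h c d u v x :
  phi h (<< c *g u >> * x * << d *g v >>) = c * d * phi (fun k => h (u ++ k ++ v)) x.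
Proof.
rewrite [in LHS](monalgE x) mulr_sumr mulr_suml.
rewrite /phi raddf_sum /= mmapE big_distrr /=.
apply: eq_bigr => k _.
rewrite !mulUU mmapU /= catA.
rewrite -!mulrA; congr (_ * _); rewrite mulrC -!mulrA; congr (_ * _); exact: mulrC.
Qed.

Lemma AlgE (a : Alg) : a = \sum_(k <- finmap.enum_fset (msupp a)) (<< a@_k *g k >> : Alg).
Proof. exact: monalgE. Qed.

Definition Kid (h : word -> Cx) (x : Alg) : Prop :=
  forall u v, phi (fun k => h (u ++ k ++ v)) x = 0.

Lemma sumMl (I : Type) (r : seq I) (F : I -> Alg) (x : Alg) :
  (\sum_(i <- r) F i) * x = \sum_(i <- r) (F i * x).
Proof. exact: mulr_suml. Qed.
Lemma sumMr (I : Type) (r : seq I) (F : I -> Alg) (x : Alg) :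
  x * (\sum_(i <- r) F i) = \sum_(i <- r) (x * F i).
Proof. exact: mulr_sumr. Qed.
Lemma phi_sum h (I : Type) (r : seq I) (F : I -> Alg) :
  phi h (\sum_(i <- r) F i) = \sum_(i <- r) phi h (F i).
Proof. exact: raddf_sum. Qed.
Lemma Kid_ideal h : two_sided_ideal (Kid h).
Proof.
split.
- by move=> u v; rewrite phi0.
- by move=> x y Hx Hy u v; rewrite phiB Hx Hy subr0.
- move=> a x b Hx u v.
  rewrite (AlgE a) (AlgE b) sumMl sumMl phi_sum.
  apply: big1 => u' _; rewrite sumMr phi_sum.
  apply: big1 => v' _; rewrite phiUxU.
  rewrite (@phi_ext _ (fun k => h ((u ++ u') ++ k ++ (v' ++ v)))).
    by rewrite Hx mulr0.
  by move=> k /=; rewrite !catA.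
Qed.


Lemma ideal_gen_ideal T : two_sided_ideal (ideal_gen T).
Proof.
split.
- by move=> I [] *.
- by move=> x y Hx Hy I HI HT; case: (HI) => _ HB _; apply: HB; [apply: Hx|apply: Hy].
- by move=> a x b Hx I HI HT; case: (HI) => _ _ HM; apply: HM; apply: Hx.
Qed.
Lemma ideal_opp I x : two_sided_ideal I -> I x -> I (- x).
Proof. by case=> H0 HB _ Hx; rewrite -sub0r; apply: HB. Qed.
Lemma ideal_add I x y : two_sided_ideal I -> I x -> I y -> I (x + y).
Proof.
move=> HI Hx Hy; case: (HI) => _ HB _.
by rewrite -[y]opprK; apply: HB => //; apply: ideal_opp.
Qed.
Lemma ideal_gen_sub (T : Alg -> Prop) t : T t -> ideal_gen T t.
Proof. by move=> Ht I _ HT; apply: HT. Qed.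

Lemma Kid_comm h F G :
  (forall u v, h (u ++ (F ++ G) ++ v) = h (u ++ (G ++ F) ++ v)) ->
  Kid h (wA F * wA G - wA G * wA F).
Proof.
move=> E u v; rewrite phiB !wAM /wA !phiU !mul1r E; exact: subrr.
Qed.

Definition ind (P : Prop) : Cx := if excluded_middle_informative P then 1 else 0.
Lemma ind_eq (P Q : Prop) : (P <-> Q) -> ind P = ind Q.
Proof.
rewrite /ind => E; case: excluded_middle_informative => p; case: excluded_middle_informative => q //.
- by exfalso; apply: q; apply/E.
- by exfalso; apply: p; apply/E.
Qed.
Lemma ind1 (P : Prop) : P -> ind P = 1.
Proof. by rewrite /ind; case: excluded_middle_informative. Qed.
Lemma ind0 (P : Prop) : ~ P -> ind P = 0.
Proof. by rewrite /ind; case: excluded_middle_informative. Qed.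
Lemma indP (P : Prop) : ind P = 1 -> P.
Proof.
rewrite /ind; case: excluded_middle_informative => // _ /eqP.
by rewrite eq_sym oner_eq0.
Qed.

Definition move (P : word -> word -> Prop) (W W' : word) :=
  exists a F G b, [/\ P F G, W = a ++ F ++ G ++ b & W' = a ++ G ++ F ++ b].
Definition reach P := clos_refl_sym_trans word (move P).

Lemma reach_cong P a b W W' : reach P W W' -> reach P (a ++ W ++ b) (a ++ W' ++ b).
Proof.
elim=> {W W'}.
- move=> W W' [a' [F [G [b' [HP -> ->]]]]]; apply: rst_step.
  exists (a ++ a'), F, G, (b' ++ b); split => //; by rewrite !catA.
- by move=> W; apply: rst_refl.
- by move=> W W' _ IH; apply: rst_sym.
- by move=> W1 W2 W3 _ IH1 _ IH2; apply: rst_trans IH2.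
Qed.

Arguments reach_cong {P} a b {W W'}.

Lemma reach_one P F G : P F G -> reach P (F ++ G) (G ++ F).
Proof.
move=> HP; apply: rst_step; exists [::], F, G, [::]; split => //; by rewrite /= cats0.
Qed.

Lemma reach_size P W W' : reach P W W' -> size W = size W'.
Proof.
elim=> {W W'} //.
- move=> W W' [a' [F [G [b' [HP -> ->]]]]]; rewrite !size_cat; lia.
- by move=> W1 W2 W3 _ -> _ ->.
Qed.

Arguments reach_size {P W W'}.

Definition PS (F G : word) : Prop := [/\ F != [::], G != [::], balanced F & balanced G].

Lemma Sgen_J t : Sgen t -> Jideal t.
Proof. exact: ideal_gen_sub. Qed.

Lemma J_reach W W' : Jideal (wA W - wA W') -> reach PS W W'.
Proof.
move=> HJ.
pose h := fun k => ind (reach PS W k).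
have HK : Kid h (wA W - wA W').
  apply: HJ; first exact: Kid_ideal.
  move=> t [F [G [nF nG bF bG ->]]]; apply: Kid_comm => u v; apply: ind_eq.
  have Hm : reach PS (u ++ (F ++ G) ++ v) (u ++ (G ++ F) ++ v).
    by apply: reach_cong; apply: reach_one.
  split=> H; [apply: rst_trans H Hm | apply: rst_trans H (rst_sym _ _ _ _ Hm)].
move: (HK [::] [::]); rewrite phiB /wA !phiU !mul1r /= !cats0 /h.
rewrite (@ind1 (reach PS W W) (rst_refl _ _ W)) => /eqP; rewrite subr_eq0 => /eqP E.
by apply: indP; rewrite -E.
Qed.

Lemma reach_ideal (Sstar : Alg -> Prop) W W' :
  reach (fun F G => Sstar (wA F * wA G - wA G * wA F)) W W' ->
  ideal_gen Sstar (wA W - wA W').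
Proof.
have HI := ideal_gen_ideal Sstar; case: (HI) => H0 HB HM.
elim=> {W W'}.
- move=> W W' [a [F [G [b [HP -> ->]]]]].
  have -> : wA (a ++ F ++ G ++ b) - wA (a ++ G ++ F ++ b) =
            wA a * (wA F * wA G - wA G * wA F) * wA b.
    by rewrite mulrBr mulrBl !wAM !catA.
  by apply: HM; apply: ideal_gen_sub.
- by move=> W; rewrite subrr.
- move=> W W' _ IH; have := HB _ _ H0 IH; by rewrite sub0r opprB.
- move=> W1 W2 W3 _ IH1 _ IH2.
  have := HB _ _ IH1 (HB _ _ H0 IH2); by rewrite sub0r opprK addrA subrK.
Qed.
Arguments J_reach {W W'}.

Lemma bal_size2 (w : word) : balanced w -> w != [::] -> (1 < size w)%N.
Proof. by case: w => [|c [|d w]] //=; case: c. Qed.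

Lemma ht_take_drop (w : word) k : ht w = ht (take k w) + ht (drop k w).
Proof. by rewrite -ht_cat cat_take_drop. Qed.

Lemma prime_interior (P : word) : prime_word P -> forall k, (0 < k)%N -> (k < size P)%N ->
  ht (take k P) != 0.
Proof.
case=> nP bP Hn k k0 kn; apply/eqP => E; apply: Hn.
exists (take k P), (drop k P); split.
- by rewrite -size_eq0 size_take kn -lt0n.
- by rewrite -size_eq0 size_drop -lt0n subn_gt0.
- by apply/balE.
- by apply/balE; move/balE: bP; rewrite (ht_take_drop P k) E add0r.
- by rewrite cat_take_drop.
Qed.

Lemma prime_sign (P : word) : prime_word P -> exists c P0 d,
  [/\ P = c :: rcons P0 d, balanced P0, lbar d = - lbar c &
      forall k, (0 < k)%N -> (k < size P)%N -> 0 < lbar c * ht (take k P)].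
Proof.
move=> HP; have HI := @prime_interior P HP; case: HP => nP bP _.
have s2 := @bal_size2 P bP nP.
case E: P nP s2 => [|c P'] // _ s2.
have Hpos : forall k, (0 < k)%N -> (k < size P)%N -> 0 < lbar c * ht (take k P).
  elim=> [//|k IH] _ kn.
  case: (posnP k) => [->|k0].
    by rewrite E /= take0 ht_cons ht_nil addr0; case: (c).
  have := IH k0 (ltnW kn); have := HI _ (ltn0Sn k) kn.
  rewrite (take_nth Lt (ltnW kn)) ht_rcons.
  case: (c); case: (nth Lt P k); rewrite /=; lia.
case/lastP: P' E s2 => [|P0 d] E s2; first by rewrite /= in s2.
have Hq : lbar d = - lbar c /\ ht P0 = 0.
  move/balE: bP; rewrite E ht_cons ht_rcons => H.
  have := Hpos (size P).-1 ltac:(rewrite E /= size_rcons; lia) ltac:(rewrite E /= size_rcons; lia).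
  rewrite E /= size_rcons /= -cats1 take_size_cat // ht_cons.
  move: H; case: (c); case: (d); rewrite /= ?mul1r ?mulN1r ?opprK => H1 H2; first [ (split; [done | lia]) | (exfalso; lia) ].
exists c, P0, d; split => //.
- by apply/balE; case: Hq.
- by case: Hq.
- by rewrite -E.
Qed.

Definition pos (w : word) := balanced w /\ pfx (fun z => 0 < z) w.
Definition neg (w : word) := balanced w /\ pfx (fun z => z < 0) w.

Lemma upper_pos U : upper_prime U -> pos U.
Proof.
case=> [[_ bU _] H]; split => // k k0 kn.
by rewrite -ek_ht ?(ltnW kn) //; apply: H; rewrite k0 kn.
Qed.
Lemma lower_neg U : lower_prime U -> neg U.
Proof.
case=> [[_ bU _] H]; split => // k k0 kn.
by rewrite -ek_ht ?(ltnW kn) //; apply: H; rewrite k0 kn.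
Qed.

Lemma prime_cases P : prime_word P ->
  (upper_prime P /\ exists P0, P = Rt :: rcons P0 Lt /\ balanced P0) \/
  (lower_prime P /\ exists P0, P = Lt :: rcons P0 Rt /\ balanced P0).
Proof.
move=> HP; have [c [P0 [d [E b0 Hd Hpos]]]] := @prime_sign P HP.
case: c E Hd Hpos => E Hd Hpos.
- right; split; last by exists P0; split => //; rewrite E; case: d Hd {E}.
  split => // k /andP [k0 kn]; rewrite ek_ht ?(ltnW kn) //.
  by have := Hpos k k0 kn; rewrite /= mulN1r oppr_gt0.
- left; split; last by exists P0; split => //; rewrite E; case: d Hd {E}.
  split => // k /andP [k0 kn]; rewrite ek_ht ?(ltnW kn) //.
  by have := Hpos k k0 kn; rewrite /= mul1r.
Qed.
Arguments prime_cases {P}.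

Definition Pst (Sstar : Alg -> Prop) (F G : word) := Sstar (wA F * wA G - wA G * wA F).

Lemma reach_lift (P : word -> word -> Prop) n :
  (forall F G, (size (F ++ G) < n)%N -> PS F G -> reach P (F ++ G) (G ++ F)) ->
  forall W W', reach PS W W' -> (size W < n)%N -> reach P W W'.
Proof.
move=> IH W W' R; elim: R.
- move=> {}W {}W' [a [F [G [b [HP -> ->]]]]] Hs.
  have Hs' : (size (F ++ G) < n)%N by move: Hs; rewrite !size_cat; lia.
  by have := reach_cong a b (IH F G Hs' HP); rewrite -!catA.
- by move=> *; apply: rst_refl.
- move=> {}W {}W' R IHR Hs; apply: rst_sym; apply: IHR; by rewrite (reach_size R).
- move=> W1 W2 W3 R1 IH1 R2 IH2 Hs; apply: rst_trans (IH1 Hs) _.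
  by apply: IH2; rewrite -(reach_size R1).
Qed.

Lemma not_prime_split (F : word) : F != [::] -> balanced F -> ~ prime_word F ->
  exists F1 F2 : word, [/\ F1 != [::], F2 != [::], balanced F1, balanced F2 & F = F1 ++ F2].
Proof.
move=> nF bF nP; apply: NNPP => H; apply: nP; split => //.
Qed.

Lemma core (Sstar : Alg -> Prop)
  (H : forall U D : word, upper_prime U -> lower_prime D ->
     exists U' D' : word, [/\ wequiv U' U, wequiv D' D &
       (Sstar (wA U' * wA D' - wA D' * wA U') \/
        Sstar (wA D' * wA U' - wA U' * wA D'))]) :
  forall n F G, (size (F ++ G) < n)%N -> PS F G -> reach (Pst Sstar) (F ++ G) (G ++ F).
Proof.
elim=> [//|n IH] F G Hs HPS.
have IHr := @reach_lift (Pst Sstar) n IH.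
have swap0 : forall A B : word, balanced A -> balanced B -> (size (A ++ B) < n)%N ->
    reach (Pst Sstar) (A ++ B) (B ++ A).
  move=> A B bA bB HAB.
  case: (eqVneq A [::]) => [->|nA]; first by rewrite cats0; apply: rst_refl.
  case: (eqVneq B [::]) => [->|nB]; first by rewrite cats0; apply: rst_refl.
  by apply: IH.
have UD : forall U D : word, upper_prime U -> lower_prime D -> (size (U ++ D) < n.+1)%N ->
    reach (Pst Sstar) (U ++ D) (D ++ U).
  move=> U D HU HD HUD.
  have nU : U != [::] by case: HU => [[]].
  have nD : D != [::] by case: HD => [[]].
  have sU : (0 < size U)%N by rewrite lt0n size_eq0.
  have sD : (0 < size D)%N by rewrite lt0n size_eq0.
  have [U' [D' [EU ED HS]]] := H U D HU HD.
  have RU := J_reach EU; have RD := J_reach ED.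
  have RU' : reach (Pst Sstar) U' U.
    apply: (IHr _ _ RU); rewrite (reach_size RU); move: HUD; rewrite size_cat; lia.
  have RD' : reach (Pst Sstar) D' D.
    apply: (IHr _ _ RD); rewrite (reach_size RD); move: HUD; rewrite size_cat; lia.
  have R1 : reach (Pst Sstar) (U ++ D) (U' ++ D').
    apply: (@rst_trans _ _ _ (U' ++ D)).
      by have := reach_cong [::] D (rst_sym _ _ _ _ RU'); rewrite /= ?cats0.
    by have := reach_cong U' [::] (rst_sym _ _ _ _ RD'); rewrite /= ?cats0.
  have R3 : reach (Pst Sstar) (D' ++ U') (D ++ U).
    apply: (@rst_trans _ _ _ (D ++ U')).
      by have := reach_cong [::] U' RD'; rewrite /= ?cats0.
    by have := reach_cong D [::] RU'; rewrite /= ?cats0.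
  eapply rst_trans; [exact: R1|]; eapply rst_trans; [|exact: R3].
  case: HS => HS; first exact: reach_one.
  by apply: rst_sym; apply: reach_one.
case: HPS => nF nG bF bG.
have sF : (0 < size F)%N by rewrite lt0n size_eq0.
have sG : (0 < size G)%N by rewrite lt0n size_eq0.
case: (classic (prime_word F)) => PF; last first.
  have [F1 [F2 [n1 n2 b1 b2 EF]]] := @not_prime_split F nF bF PF.
  have s1 : (0 < size F1)%N by rewrite lt0n size_eq0.
  have s2 : (0 < size F2)%N by rewrite lt0n size_eq0.
  rewrite EF; apply: (@rst_trans _ _ _ (F1 ++ G ++ F2)).
    have := reach_cong F1 [::] (swap0 F2 G b2 bG ltac:(move: Hs; rewrite EF !size_cat; lia)).
    by rewrite ?cats0 -!catA.
  have := reach_cong [::] F2 (swap0 F1 G b1 bG ltac:(move: Hs; rewrite EF !size_cat; lia)).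
  by rewrite /= -!catA.
case: (classic (prime_word G)) => PG; last first.
  have [G1 [G2 [n1 n2 b1 b2 EG]]] := @not_prime_split G nG bG PG.
  have s1 : (0 < size G1)%N by rewrite lt0n size_eq0.
  have s2 : (0 < size G2)%N by rewrite lt0n size_eq0.
  rewrite EG; apply: (@rst_trans _ _ _ (G1 ++ F ++ G2)).
    have := reach_cong [::] G2 (swap0 F G1 bF b1 ltac:(move: Hs; rewrite EG !size_cat; lia)).
    by rewrite /= -!catA.
  have := reach_cong G1 [::] (swap0 F G2 bF b2 ltac:(move: Hs; rewrite EG !size_cat; lia)).
  by rewrite ?cats0 -!catA.
case: (prime_cases PF) => [[UF [F0 [EF bF0]]]|[LF [F0 [EF bF0]]]];
case: (prime_cases PG) => [[UG [G0 [EG bG0]]]|[LG [G0 [EG bG0]]]].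
- have E1 : F ++ G = [:: Rt] ++ (F0 ++ ([:: Lt; Rt] ++ G0)) ++ [:: Lt].
    by rewrite EF EG /= -!cats1 -!catA.
  have E2 : G ++ F = [:: Rt] ++ ((G0 ++ [:: Lt; Rt]) ++ F0) ++ [:: Lt].
    by rewrite EF EG /= -!cats1 -!catA.
  have Hs' : (size (F0 ++ [:: Lt; Rt] ++ G0) < n)%N.
    by move: Hs; rewrite EF EG !size_cat /= !size_rcons; lia.
  rewrite E1 E2; apply: reach_cong; apply: rst_trans (swap0 _ _ bF0 _ Hs') _.
    by apply/balE; rewrite ht_cat; move/balE: bG0 => ->.
  by have := reach_cong [::] F0 (swap0 [:: Lt; Rt] G0 isT bG0 ltac:(move: Hs'; rewrite !size_cat; lia)); rewrite /= -!catA.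
- by apply: UD.
- by apply: rst_sym; apply: UD => //; rewrite size_cat addnC -size_cat.
- have E1 : F ++ G = [:: Lt] ++ (F0 ++ ([:: Rt; Lt] ++ G0)) ++ [:: Rt].
    by rewrite EF EG /= -!cats1 -!catA.
  have E2 : G ++ F = [:: Lt] ++ ((G0 ++ [:: Rt; Lt]) ++ F0) ++ [:: Rt].
    by rewrite EF EG /= -!cats1 -!catA.
  have Hs' : (size (F0 ++ [:: Rt; Lt] ++ G0) < n)%N.
    by move: Hs; rewrite EF EG !size_cat /= !size_rcons; lia.
  rewrite E1 E2; apply: reach_cong; apply: rst_trans (swap0 _ _ bF0 _ Hs') _.
    by apply/balE; rewrite ht_cat; move/balE: bG0 => ->.
  by have := reach_cong [::] F0 (swap0 [:: Rt; Lt] G0 isT bG0 ltac:(move: Hs'; rewrite !size_cat; lia)); rewrite /= -!catA.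
Qed.

Lemma cat_split (s t X Y : word) : s ++ t = X ++ Y -> (size s <= size X)%N ->
  X = s ++ take (size X - size s) t /\ Y = drop (size X - size s) t.
Proof.
move=> E le; split.
- by have := congr1 (take (size X)) E; rewrite (@take_size_cat _ _ X Y erefl) take_cat ltnNge le /= => EX; exact: esym EX.
- by have := congr1 (drop (size X)) E; rewrite (@drop_size_cat _ _ X Y erefl) drop_cat ltnNge le /= => EX; exact: esym EX.
Qed.

Lemma wequiv_move (a F G b V : word) : PS G F ->
  wequiv (a ++ F ++ G ++ b) V -> wequiv (a ++ G ++ F ++ b) V.
Proof.
move=> HP HV; have HI := ideal_gen_ideal Sgen; case: (HI) => H0 HB HM.
have H1 : Jideal (wA (a ++ G ++ F ++ b) - wA (a ++ F ++ G ++ b)).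
  have -> : wA (a ++ G ++ F ++ b) - wA (a ++ F ++ G ++ b) =
            wA a * (wA G * wA F - wA F * wA G) * wA b.
    by rewrite mulrBr mulrBl !wAM !catA.
  apply: HM; apply: ideal_gen_sub; case: HP => nG nF bG bF.
  by exists G, F; split.
rewrite /wequiv; have := HB _ _ H1 (HB _ _ H0 HV).
by rewrite sub0r opprK addrA subrK.
Qed.

Lemma pfx_FG Q (F G : word) : F != [::] -> G != [::] -> ht F = 0 -> ~~ Q 0 -> ~ pfx Q (F ++ G).
Proof.
move=> nF nG hF nQ H.
have sF : (0 < size F)%N by rewrite lt0n size_eq0.
have sG : (0 < size G)%N by rewrite lt0n size_eq0.
have := H (size F) sF ltac:(rewrite size_cat; lia).
by rewrite take_size_cat // hF (negbTE nQ).
Qed.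

Definition Cset (U D W : word) : Prop :=
  exists X Y, [/\ W = X ++ Y, wequiv X U, wequiv Y D, pos X & neg Y].

Lemma C_split (F G X Y : word) : PS F G -> F ++ G = X ++ Y -> pos X -> neg Y ->
  F = X /\ G = Y.
Proof.
case=> nF nG bF bG E [bX pX] [bY nY].
have sF : (0 < size F)%N by rewrite lt0n size_eq0.
have sG : (0 < size G)%N by rewrite lt0n size_eq0.
have hF : ht F = 0 by apply/balE.
have hX : ht X = 0 by apply/balE.
have sz : (size F + size G = size X + size Y)%N by rewrite -!size_cat E.
case: (ltngtP (size F) (size X)) => c.
- exfalso; have := pX (size F) sF c.
  have : take (size F) (X ++ Y) = take (size F) X by rewrite take_cat c.
  by rewrite -E take_size_cat // => <-; rewrite hF.
- exfalso; have := nY (size F - size X)%N ltac:(lia) ltac:(lia).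
  have : take (size F) (X ++ Y) = X ++ take (size F - size X) Y.
    by rewrite take_cat ltnNge (ltnW c).
  by rewrite -E take_size_cat // => /(congr1 ht); rewrite ht_cat hF hX add0r => <-.
- split.
  + by have := congr1 (take (size F)) E; rewrite (@take_size_cat _ _ F G erefl) c (@take_size_cat _ _ X Y erefl).
  + by have := congr1 (drop (size F)) E; rewrite (@drop_size_cat _ _ F G erefl) c (@drop_size_cat _ _ X Y erefl).
Qed.

Lemma C_move (U D a F G b : word) : PS F G -> (a != [::]) || (b != [::]) ->
  Cset U D (a ++ F ++ G ++ b) -> Cset U D (a ++ G ++ F ++ b).
Proof.
move=> HP nab [X [Y [E wX wY [bX pX] [bY nY]]]].
have HP' := HP; case: HP' => nF nG bF bG.
have sF : (0 < size F)%N by rewrite lt0n size_eq0.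
have sG : (0 < size G)%N by rewrite lt0n size_eq0.
have hF : ht F = 0 by apply/balE.
have hG : ht G = 0 by apply/balE.
have hX : ht X = 0 by apply/balE.
have hY : ht Y = 0 by apply/balE.
have HPGF : PS G F by [].
have sz : (size a + size F + size G + size b = size X + size Y)%N.
  by rewrite -!size_cat -E !catA.
have dich : (size a + size F + size G <= size X)%N \/ (size X <= size a)%N.
  case: (leqP (size a + size F + size G) (size X)) => c1; first by left.
  case: (leqP (size X) (size a)) => c2; first by right.
  exfalso.
  set p := (size a + size F + size G)%N.
  have Hp : ht (take p (X ++ Y)) = ht a.
    rewrite -E catA catA take_size_cat; last by rewrite !size_cat /p; lia.
    by rewrite !ht_cat hF hG !addr0.
  have Hp2 : ht (take p (X ++ Y)) = ht (take (p - size X) Y).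
    by rewrite take_cat ltnNge (ltnW c1) /= ht_cat hX add0r.
  case: (posnP (size a)) => a0.
    have a0' : a = [::] by apply: size0nil.
    have b0 : (0 < size b)%N by move: nab; rewrite a0' /= lt0n size_eq0.
    have := nY (p - size X)%N ltac:(lia) ltac:(lia).
    by rewrite -Hp2 Hp a0' ht_nil ltxx.
  have := pX (size a) a0 c2.
  have : take (size a) X = a.
    have := congr1 (take (size a)) E.
    by rewrite take_size_cat // take_cat c2 => <-.
  move=> ->.
  case: (ltnP (p - size X) (size Y)) => c3.
    have := nY (p - size X)%N ltac:(lia) c3.
    rewrite -Hp2 Hp => h1 h2; move: (lt_trans h1 h2); by rewrite ltxx.
  have Hw : ht a = 0.
    by rewrite -Hp take_oversize ?size_cat ?ht_cat ?hX ?hY ?addr0 //; lia.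
  by rewrite Hw ltxx.
case: dich => c.
- have E' : (a ++ F ++ G) ++ b = X ++ Y by rewrite -!catA.
  have [EX EY] := @cat_split _ _ X Y E' ltac:(rewrite !size_cat; lia).
  set b1 := take (size X - size (a ++ F ++ G)) b in EX EY.
  have Eb : b = b1 ++ Y by rewrite EY cat_take_drop.
  have EX' : X = a ++ F ++ G ++ b1 by rewrite EX -!catA.
  exists (a ++ G ++ F ++ b1), Y; split => //.
  + by rewrite {1}Eb -!catA.
  + by apply: wequiv_move => //; rewrite -EX'.
  + split.
      apply/balE; rewrite !ht_cat hF hG; move: hX; rewrite EX' !ht_cat hF hG.
      by rewrite !add0r.
    apply: pfx_swap => //; last by rewrite -EX'.
    case: (eqVneq a [::]) => //= a0; case: (eqVneq b1 [::]) => //= b0.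
    exfalso; move: pX; rewrite EX' a0 b0 /= cats0.
    by apply: pfx_FG => //; rewrite ltxx.
- have E' : X ++ Y = a ++ (F ++ G ++ b) by [].
  have [EA ER] := @cat_split _ _ a (F ++ G ++ b) E' c.
  set a1 := take (size a - size X) Y in EA ER.
  have EY : Y = a1 ++ F ++ G ++ b by rewrite ER cat_take_drop.
  exists X, (a1 ++ G ++ F ++ b); split => //.
  + by rewrite {1}EA -!catA.
  + by apply: wequiv_move => //; rewrite -EY.
  + split.
      apply/balE; rewrite !ht_cat hF hG; move: hY; rewrite EY !ht_cat hF hG.
      by rewrite !add0r.
    apply: pfx_swap => //; last by rewrite -EY.
    case: (eqVneq a1 [::]) => //= a0; case: (eqVneq b [::]) => //= b0.
    exfalso; move: nY; rewrite EY a0 b0 /= cats0.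
    by apply: pfx_FG => //; rewrite ltxx.
Qed.

Theorem proposition5p7 (Sstar : Alg -> Prop) (HS : forall x, Sstar x -> Sgen x) :
  (forall x : Alg, ideal_gen Sstar x <-> Jideal x) <->
  (forall U D : word, upper_prime U -> lower_prime D ->
     exists U' D' : word, [/\ wequiv U' U, wequiv D' D &
       (Sstar (wA U' * wA D' - wA D' * wA U') \/
        Sstar (wA D' * wA U' - wA U' * wA D'))]).
Proof.
split.
- move=> Hgen U D HU HD; apply: NNPP => Hno.
  pose h := fun W => ind (Cset U D W).
  have HK : two_sided_ideal (Kid h) := Kid_ideal h.
  have HSK : forall t, Sstar t -> Kid h t.
    move=> t Ht; have [F [G [nF nG bF bG Et]]] := HS t Ht.
    move: Ht; rewrite Et => Ht.
    apply: Kid_comm => u v; apply: ind_eq.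
    have HP : PS F G by split.
    have HP' : PS G F by split.
    case: (eqVneq u [::]) => u0; case: (eqVneq v [::]) => v0.
    + rewrite u0 v0 /= !cats0; split.
      * case=> X [Y [E wX wY pX nY]]; exfalso; apply: Hno.
        have [EF EG] := @C_split _ _ X Y HP E pX nY.
        by exists X, Y; split => //; left; rewrite -EF -EG.
      * case=> X [Y [E wX wY pX nY]]; exfalso; apply: Hno.
        have [EF EG] := @C_split _ _ X Y HP' E pX nY.
        by exists X, Y; split => //; right; rewrite -EF -EG.
    1-3: rewrite -!catA; split; apply: C_move => //; by rewrite ?u0 ?v0.
  have nU : U != [::] by case: HU => [[]].
  have nD : D != [::] by case: HD => [[]].
  have bU : balanced U by case: HU => [[]].
  have bD : balanced D by case: HD => [[]].
  have HUD : Jideal (wA U * wA D - wA D * wA U).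
    by apply: Sgen_J; exists U, D; split.
  have := (Hgen _).2 HUD (Kid h) HK HSK [::] [::].
  rewrite phiB !wAM /wA !phiU !mul1r /= !cats0 /h.
  have JUU : forall V, wequiv V V.
    by move=> V; rewrite /wequiv subrr; case: (ideal_gen_ideal Sgen).
  rewrite ind1; last by exists U, D; split => //; [apply: upper_pos | apply: lower_neg].
  rewrite ind0; first by rewrite subr0 => /eqP; rewrite oner_eq0.
  case=> X [Y [E wX wY pX nY]].
  have HP : PS D U by split.
  have [EF EG] := @C_split _ _ X Y HP E pX nY.
  have s2 := @bal_size2 D bD nD.
  have [_ nD'] := @lower_neg D HD.
  move: pX => [_ pX]; rewrite -EF in pX.
  have := pX 1%N isT s2; have := nD' 1%N isT s2.
  by move=> h1 h2; move: (lt_trans h1 h2); rewrite ltxx.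
- move=> H x; split.
  + by move=> Hx; apply: Hx; [exact: ideal_gen_ideal | move=> t /HS; exact: Sgen_J].
  + move=> Hx; apply: Hx; first exact: ideal_gen_ideal.
    move=> t [F [G [nF nG bF bG ->]]].
    have HP : PS F G by split.
    have := @reach_ideal Sstar _ _ (@core Sstar H (size (F ++ G)).+1 F G (leqnn _) HP).
    by rewrite -!wAM.
Qed.
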